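(* Let $A$ be a left brace and let $a\in A$ be an element of infinite additive order. Let $c=a\star a$ and suppose that $a\star c=0$. Then $\langle a\rangle\cap\langle c\rangle=0$, where $\langle x\rangle$ denotes the cyclic subgroup of $(A,+)$ generated by $x$. In particular, if $a\in\zeta_2(\star,A)$ (and $a$ has infinite additive order), then $\langle a\rangle\cap\langle a\star a\rangle=0$.
   Context: A left brace is a set $A$ with two operations $+$ and $\cdot$ such that $(A,+)$ is an abelian group, $(A,\cdot)$ is a group, and $a(b+c)=ab+ac-a$ for all $a,b,c\in A$. Put $a\star b=ab-a-b$. The $\star$-center is $\zeta(\star,A)=\{a: a\star x=x\star a=0\ \forall x\in A\}$, an ideal of $A$; $\zeta_2(\star,A)$ is defined by $\zeta_2(\star,A)/\zeta(\star,A)=\zeta(\star,A/\zeta(\star,A))$. *)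

(* Defs.v *)
From HB Require Import structures.
From mathcomp Require Import all_boot all_algebra.
Set Implicit Arguments. Unset Strict Implicit. Unset Printing Implicit Defensive.
Import GRing.Theory.
Local Open Scope ring_scope.

Record left_brace (A : zmodType) := LeftBrace {
  bmul : A -> A -> A;
  bone : A;
  binv : A -> A;
  bmulA : forall x y z, bmul x (bmul y z) = bmul (bmul x y) z;
  bmul1l : forall x, bmul bone x = x;
  bmul1r : forall x, bmul x bone = x;
  bmulVl : forall x, bmul (binv x) x = bone;
  bmulVr : forall x, bmul x (binv x) = bone;
  bdistr : forall x y z, bmul x (y + z) = bmul x y + bmul x z - x
}.

Definition bstar (A : zmodType) (B : left_brace A) (x y : A) : A :=
  bmul B x y - x - y.

Definition star_center (A : zmodType) (B : left_brace A) (x : A) : Prop :=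
  forall y, bstar B x y = 0 /\ bstar B y x = 0.

(* zeta_2(star, A): a + zeta is star-central in A / zeta, i.e. (since the
   operations of the quotient brace are computed on representatives)
   a star x and x star a lie in zeta(star, A) for all x. *)
Definition star_center2 (A : zmodType) (B : left_brace A) (x : A) : Prop :=
  forall y, star_center B (bstar B x y) /\ star_center B (bstar B y x).

Definition in_cyclic (A : zmodType) (x y : A) : Prop :=
  exists k : int, y = x *~ k.

Definition cyclic_cap_trivial (A : zmodType) (x y : A) : Prop :=
  forall z, in_cyclic x z -> in_cyclic y z -> z = 0.

Definition infinite_add_order (A : zmodType) (x : A) : Prop :=
  forall n : nat, (0 < n)%N -> x *+ n <> 0.

(* Main.v *)
Require Import Defs.
From mathcomp Require Import all_boot all_algebra.
Import GRing.Theory.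
Local Open Scope ring_scope.
Set Implicit Arguments.

Lemma aux (A : zmodType) (u v a x y : A) : u + v - a - a - (x + y) = u - a - x + (v - a - y).
Proof.
rewrite !opprD !addrA; congr (_ - _).
by rewrite [u-a-x+v]addrAC [u-a+v-x-a]addrAC [u-a+v]addrAC.
Qed.

Lemma bstarD (A : zmodType) (B : left_brace A) a x y :
  bstar B a (x + y) = bstar B a x + bstar B a y.
Proof. by rewrite /bstar bdistr aux. Qed.

Lemma bstar0 (A : zmodType) (B : left_brace A) a : bstar B a 0 = 0.
Proof.
have := bstarD B a 0 0; rewrite addr0 => H.
have : bstar B a 0 + bstar B a 0 = bstar B a 0 + 0 by rewrite addr0 -H.
by move/addrI.
Qed.

Lemma bstarN (A : zmodType) (B : left_brace A) a x : bstar B a (- x) = - bstar B a x.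
Proof.
apply/eqP; rewrite -subr_eq0 opprK -bstarD addNr bstar0 //.
Qed.

Lemma bstarMn (A : zmodType) (B : left_brace A) a x n :
  bstar B a (x *+ n) = bstar B a x *+ n.
Proof. elim: n => [|n IH]; first by rewrite !mulr0n bstar0.
by rewrite !mulrS bstarD IH. Qed.

Lemma bstarMz (A : zmodType) (B : left_brace A) a x k :
  bstar B a (x *~ k) = bstar B a x *~ k.
Proof. case: k => n; first exact: bstarMn.
by rewrite NegzE !mulrNz bstarN -!pmulrn bstarMn. Qed.

Lemma infz (A : zmodType) (a : A) k : infinite_add_order a -> a *~ k = 0 -> k = 0.
Proof.
move=> Hi; case: k => n.
  case: n => // n; move=> /= H; exfalso; exact: (Hi n.+1).
rewrite NegzE mulrNz => /eqP; rewrite oppr_eq0 -pmulrn => /eqP H.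
exfalso; exact: (Hi n.+1).
Qed.

Theorem proposition3p3 (A : zmodType) (B : left_brace A) (a : A) :
  infinite_add_order a ->
  (bstar B a (bstar B a a) = 0%R -> cyclic_cap_trivial a (bstar B a a)) /\
  (star_center2 B a -> cyclic_cap_trivial a (bstar B a a)).
Proof.
move=> Hi.
have P1 : bstar B a (bstar B a a) = 0%R -> cyclic_cap_trivial a (bstar B a a).
  move=> Hc z [m Hm] [n Hn].
  have Hcm : bstar B a a *~ m = 0.
    by rewrite -bstarMz -Hm Hn bstarMz Hc mul0rz.
  have : a *~ (m * m) = 0 by rewrite mulrzA -Hm Hn -mulrzA mulrC mulrzA Hcm mul0rz.
  move/(@infz _ _ _ Hi)/eqP; rewrite mulf_eq0 orbb => /eqP Em.
  by rewrite Hm Em mulr0z.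
split=> //.
move=> H2; apply: P1; exact: (proj2 ((proj1 (H2 a)) a)).
Qed.
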